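(* Let $G$ be a digraph and let $\alpha^{(n+1)}>\gamma^{(n)}>\beta^{(n-1)}$ be allowed elementary paths on $G$ (of lengths $n+1,n,n-1$) such that their starting vertices are not all the same or their end vertices are not all the same. Write $\alpha=v_0v_1\cdots v_{n+1}$. Then either (a) there exists an allowed elementary $n$-path $\gamma'\neq\gamma$ with $\alpha>\gamma'>\beta$; or (b) $\beta$ is obtained from $\alpha$ by removing $v_0\to v_1$ or by removing $v_n\to v_{n+1}$.
   Context: A digraph $G=(V,E)$ consists of a set $V$ and $E\subseteq(V\times V)\setminus\{(v,v)\}$; $(u,v)\in E$ is written $u\to v$. An allowed elementary $n$-path is a sequence $v_0\cdots v_n$ of vertices with $v_{i-1}\to v_i\in E$ for $1\le i\le n$. For allowed elementary paths, $\gamma'<\gamma$ (equivalently $\gamma>\gamma'$) means $\gamma'$ is obtained from $\gamma$ by deleting some of its entries. *)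

(* Defs.v *)
From mathcomp Require Import all_boot.
Set Implicit Arguments. Unset Strict Implicit. Unset Printing Implicit Defensive.

(* A digraph is a vertex type V (with decidable equality) and an edge
   relation E : rel V, assumed irreflexive (no loops). *)

Definition allowed_path (V : eqType) (E : rel V) (n : nat) (p : seq V) : bool :=
  (size p == n.+1) && (if p is x :: s then path E x s else false).

Definition path_lt (V : eqType) (g' g : seq V) : bool :=
  subseq g' g && (size g' < size g).

Definition start_vertex (V : eqType) (p : seq V) : option V := ohead p.
Definition end_vertex (V : eqType) (p : seq V) : option V := ohead (rev p).

(* Main.v *)
Require Import Defs.
From mathcomp Require Import all_boot zify.

Lemma del1 (V : eqType) (a g : seq V) : subseq g a -> size a = (size g).+1 ->
  exists p x q, a = p ++ x :: q /\ g = p ++ q.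
Proof.
elim: a g => [|x a IH] g //= Hs Hz.
case: g Hs Hz => [|y g] /=.
  by case: a IH => // _ _ _; exists [::], x, [::].
case: eqP => [-> Hs [Hz]|_ Hs [Hz]].
  have [p [z [q [-> ->]]]] := IH g Hs Hz.
  by exists (x :: p), z, q.
have /eqP <- : (y :: g) == a by rewrite -(size_subseq_leqif Hs).2 /= Hz.
by exists [::], x, (y :: g).
Qed.

Lemma splitcat (V : eqType) (p q p' q' : seq V) z : p ++ q = p' ++ z :: q' ->
  (exists r, p = p' ++ z :: r /\ q' = r ++ q) \/ (exists r, p' = p ++ r /\ q = r ++ z :: q').
Proof.
elim: p p' => [|a p IH] p' /=.
  by move=> ->; right; exists p'.
case: p' => [|b p'] /= [-> H].
  by left; exists p.
case: (IH p' H) => [[r [-> ->]]|[r [-> ->]]]; [left|right]; by exists r.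
Qed.

Lemma allowedE (V : eqType) (E : rel V) m p : allowed_path E m p = (size p == m.+1) && sorted E p.
Proof. by case: p. Qed.

Lemma ev_cat (V : eqType) (s t : seq V) : t != [::] -> end_vertex (s ++ t) = end_vertex t.
Proof. rewrite /end_vertex rev_cat; by case/lastP: t => // t x _; rewrite rev_rcons. Qed.

Lemma core (V : eqType) (E : rel V) (HE : irreflexive E) (n : nat)
  (A B C : seq V) x y alpha gamma beta :
  alpha = A ++ x :: B ++ y :: C -> beta = A ++ B ++ C ->
  gamma = A ++ B ++ y :: C \/ gamma = A ++ x :: B ++ C ->
  size alpha = n.+2 -> sorted E alpha -> sorted E beta ->
  (~ (start_vertex alpha = start_vertex gamma /\
      start_vertex gamma = start_vertex beta) \/
   ~ (end_vertex alpha = end_vertex gamma /\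
      end_vertex gamma = end_vertex beta)) ->
  (exists gamma' : seq V,
      [/\ allowed_path E n gamma', gamma' <> gamma,
          path_lt gamma' alpha & path_lt beta gamma'])
  \/ beta = drop 2 alpha \/ beta = take n alpha.
Proof.
move=> Ea Eb Eg sa Sa Sb Hc.
case: B Ea Eb Eg => [|b B'] Ea Eb Eg.
  case: A Ea Eb Eg => [|a A'] Ea Eb Eg.
    right. left. rewrite Ea Eb. by rewrite /= drop0.
  case/lastP: C Ea Eb Eg => [|C' c] Ea Eb Eg.
    right; right; rewrite Ea Eb !cats0 (take_size_cat (s1 := a :: A')) //.
    move: sa; rewrite Ea size_cat /=; lia.
  exfalso; case: Hc; apply; subst;
  case: Eg => ->; rewrite /end_vertex /start_vertex ?rev_cat ?rev_cons ?rev_rcons /=; by split.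
have Sg1 : sorted E (A ++ b :: B' ++ y :: C).
  move: (Sa) (Sb); rewrite Ea Eb /= !sorted_cat_cons /=.
  by case/andP=> _ /andP[_ ->] /andP[-> _].
have Sg2 : sorted E (A ++ x :: b :: B' ++ C).
  move: (Sa) (Sb); rewrite Ea Eb /= !sorted_cat_cons /=.
  case/andP=> -> /andP[-> H] /andP[_ H2] /=.
  by move: H H2; rewrite !cat_path /= => /andP[-> _] /andP[_ ->].
have Hne : A ++ b :: B' ++ y :: C <> A ++ x :: b :: B' ++ C.
  move/(congr1 (drop (size A))); rewrite !drop_size_cat // => -[ebx _].
  move: Sa; rewrite Ea sorted_cat_cons /= ebx => /andP[_ /andP[]].
  by rewrite HE.
have szA : (size A + size B' + size C).+1 = n.
  move: sa; rewrite Ea size_cat /= size_cat /=; lia.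
have sz1 : size (A ++ b :: B' ++ y :: C) = n.+1 by rewrite !size_cat /= !size_cat /=; lia.
have sz2 : size (A ++ x :: b :: B' ++ C) = n.+1 by rewrite !size_cat /= !size_cat /=; lia.
have Al1 : allowed_path E n (A ++ b :: B' ++ y :: C) by rewrite allowedE sz1 eqxx.
have Al2 : allowed_path E n (A ++ x :: b :: B' ++ C) by rewrite allowedE sz2 eqxx.
have sa' : size alpha = n.+2 by [].
have sb : size beta = n by rewrite Eb !size_cat /= ?size_cat /=; lia.
have L1a : path_lt (A ++ b :: B' ++ y :: C) alpha.
  rewrite /path_lt sz1 sa' ltnSn andbT Ea.
  exact: (cat_subseq (subseq_refl A) (subseq_cons _ x)).
have L2a : path_lt (A ++ x :: b :: B' ++ C) alpha.
  rewrite /path_lt sz2 sa' ltnSn andbT Ea.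
  exact: (cat_subseq (subseq_refl A) (cat_subseq (subseq_refl (x :: b :: B')) (subseq_cons C y))).
have Lb1 : path_lt beta (A ++ b :: B' ++ y :: C).
  rewrite /path_lt sz1 sb ltnSn andbT Eb.
  exact: (cat_subseq (subseq_refl A) (cat_subseq (subseq_refl (b :: B')) (subseq_cons C y))).
have Lb2 : path_lt beta (A ++ x :: b :: B' ++ C).
  rewrite /path_lt sz2 sb ltnSn andbT Eb.
  exact: (cat_subseq (subseq_refl A) (subseq_cons _ x)).
left; case: Eg => ->.
  by exists (A ++ x :: b :: B' ++ C); split => // H; apply: Hne.
by exists (A ++ b :: B' ++ y :: C); split.
Qed.

Theorem lemma2p2 (V : eqType) (E : rel V) (HE : irreflexive E)
  (n : nat) (Hn : 0 < n) (alpha gamma beta : seq V) :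
  allowed_path E n.+1 alpha ->
  allowed_path E n gamma ->
  allowed_path E n.-1 beta ->
  path_lt gamma alpha ->
  path_lt beta gamma ->
  (~ (start_vertex alpha = start_vertex gamma /\
      start_vertex gamma = start_vertex beta) \/
   ~ (end_vertex alpha = end_vertex gamma /\
      end_vertex gamma = end_vertex beta)) ->
  (exists gamma' : seq V,
      [/\ allowed_path E n gamma', gamma' <> gamma,
          path_lt gamma' alpha & path_lt beta gamma'])
  \/ beta = drop 2 alpha \/ beta = take n alpha.
Proof.
move=> Ha Hg Hb.
move: Ha Hg Hb; rewrite !allowedE => /andP[/eqP sa Sa] /andP[/eqP sg _] /andP[/eqP sb Sb].
move=> /andP[sga _] /andP[sbg _] Hc.
have [p [x [q [Ea Eg]]]] := @del1 _ _ _ sga (etrans sa (congr1 S (esym sg))).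
have [p' [z [q' [Eg' Eb]]]] := @del1 _ _ _ sbg (etrans sg (congr1 S (esym (etrans sb (prednK Hn))))).
case: (@splitcat _ _ _ _ _ _ (etrans (esym Eg) Eg')) => [[r [Ep Eq']]|[r [Ep' Eq]]].
  apply: (@core _ _ HE n p' r q z x alpha gamma beta _ _ _ sa Sa Sb Hc).
  - by rewrite Ea Ep -catA.
  - by rewrite Eb Eq'.
  - by right; rewrite Eg Ep -catA.
apply: (@core _ _ HE n p r q' x z alpha gamma beta _ _ _ sa Sa Sb Hc).
- by rewrite Ea Eq.
- by rewrite Eb Ep' -catA.
- by left; rewrite Eg Eq.
Qed.
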